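(* Assume $0<h<1$, $2/h\notin\mathbb Z$ and $\lim_{\beta\to\infty}|\Lambda_{L_\beta}|e^{-2\beta}=0$. Then there exists a finite constant $C_0$ such that $$\frac{\mu_\beta(\mathscr V_{\mathbf{-1}}\setminus\{\mathbf{-1}\})}{\mu_\beta(\mathbf{-1})}\le C_0\,|\Lambda_L|\,e^{-2\beta}\quad\text{for all }\beta\ge C_0.$$ In particular this ratio tends to $0$ as $\beta\to\infty$.
   Context: Blume–Capel model. Fix $h\in(0,2)$, $n_0=\lfloor 2/h\rfloor$. For each $\beta>0$, $L=L_\beta$ is a positive integer (with $L_\beta\ge n_0(n_0+1)+2$), $\Lambda_L$ the two-dimensional discrete torus of side $L$, $\Omega_L=\{-1,0,1\}^{\Lambda_L}$. Hamiltonian $\mathbb H(\sigma)=\sum(\sigma(y)-\sigma(x))^2-h\sum_x\sigma(x)$, first sum over unordered nearest-neighbour pairs. $\mu_\beta(\sigma)=Z_\beta^{-1}e^{-\beta\mathbb H(\sigma)}$. $\sigma^{x,\pm}$: replace $\sigma(x)$ by $\sigma(x)\pm1$ modulo $3$ in $\{-1,0,1\}$. $\mathbf{-1}$ is the all-$(-1)$ configuration. $N(\sigma)=\#\{x:\sigma(x)\ne-1\}$. $\mathfrak R$ is the set of configurations equal to $0$ on a rectangle of sites with side lengths $n_0$ and $n_0+1$ (either orientation) and $-1$ elsewhere. The valley of $\mathbf{-1}$ is $\mathscr V_{\mathbf{-1}}=\{\sigma:N(\sigma)\le n_0(n_0+1)\}\cup\{\sigma^{x,\pm}:\sigma\in\mathfrak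 R,x\in\Lambda_L\}$. *)

(* Defs.v *)
From Stdlib Require Import Reals.
From mathcomp Require Import all_boot.
Set Implicit Arguments. Unset Strict Implicit. Unset Printing Implicit Defensive.

(* Spins: s : 'I_3 encodes the spin value (s - 1) in {-1, 0, 1}. *)
Notation spin := 'I_3.
Definition spin_val (s : spin) : R := Rminus (INR (nat_of_ord s)) 1.
Definition spin_m1 : spin := @Ordinal 3 0 isT.
Definition spin_0  : spin := @Ordinal 3 1 isT.

Notation site L := ('I_L * 'I_L)%type.
Notation config L := {ffun site L -> spin}.

Definition right_nb L (x : site L) : site L := (ordS x.1, x.2).
Definition up_nb L (x : site L) : site L := (x.1, ordS x.2).

Definition Rsum (I : finType) (P : pred I) (F : I -> R) : R :=
  \big[Rplus/R0]_(i : I | P i) F i.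

(* Hamiltonian: sum over unordered nearest-neighbour pairs {x, x+e1}, {x, x+e2}
   (each counted once when L >= 3) minus h * sum of spins. *)
Definition Ham (h : R) L (s : config L) : R :=
  Rminus
    (Rsum (I := site L) xpredT
      (fun x => Rplus (pow (Rminus (spin_val (s (right_nb x))) (spin_val (s x))) 2)
                      (pow (Rminus (spin_val (s (up_nb x))) (spin_val (s x))) 2)))
    (Rmult h (Rsum (I := site L) xpredT (fun x => spin_val (s x)))).

Definition Zpart (h beta : R) L : R :=
  Rsum (I := config L) xpredT (fun s => exp (Ropp (Rmult beta (Ham h s)))).

Definition mu (h beta : R) L (A : pred (config L)) : R :=
  Rdiv (Rsum (I := config L) A (fun s => exp (Ropp (Rmult beta (Ham h s))))) (Zpart h beta L).

Definition minus1 L : config L := [ffun _ => spin_m1].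

(* sigma^{x,+} and sigma^{x,-}: spin at x shifted by +1 / -1 modulo 3. *)
Definition flip_plus L (s : config L) (x : site L) : config L :=
  [ffun y => if y == x then ordS (s x) else s y].
Definition flip_minus L (s : config L) (x : site L) : config L :=
  [ffun y => if y == x then ord_pred (s x) else s y].

Definition Nnot L (s : config L) : nat := #|[set x | s x != spin_m1]|.

Definition n0 (h : R) : nat := Z.to_nat (Int_part (Rdiv 2 h)).

(* Site x lies in the torus rectangle with lower-left corner (a,b),
   horizontal side w and vertical side v:
   x = ((a + i) mod L, (b + j) mod L) with i < w, j < v. *)
Definition in_rect L (a b : 'I_L) (w v : nat) (x : site L) : bool :=
  (((x.1 + L - a) %% L < w) && ((x.2 + L - b) %% L < v))%N.

Definition in_Rset (h : R) L (s : config L) : bool :=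
  [exists a : 'I_L, exists b : 'I_L,
     (s == [ffun x => if in_rect a b (n0 h) (n0 h).+1 x then spin_0 else spin_m1])
  || (s == [ffun x => if in_rect a b (n0 h).+1 (n0 h) x then spin_0 else spin_m1])].

Definition valley (h : R) L (s : config L) : bool :=
  (Nnot s <= n0 h * (n0 h).+1)%N
  || [exists t : config L, exists x : site L,
        in_Rset h t && ((s == flip_plus t x) || (s == flip_minus t x))].

(* Main.v *)
Require Import Defs.
From Stdlib Require Import Reals Lra ZArith.
From mathcomp Require Import all_boot zify Rstruct.
Set Implicit Arguments. Unset Strict Implicit. Unset Printing Implicit Defensive.
Local Open Scope R_scope.
Local Close Scope R_scope.

Local Close Scope R_scope.

Lemma iter_ordS_val L (i : 'I_L) d : val (iter d (@ordS L) i) = (i + d) %% L.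
Proof.
elim: d => [|d IH] /=; first by rewrite addn0 modn_small.
by rewrite IH /= addnS -addn1 modnDml addn1.
Qed.

Lemma iter_ordS_L L (i : 'I_L) : iter L (@ordS L) i = i.
Proof. by apply: val_inj; rewrite iter_ordS_val modnDr modn_small. Qed.

Lemma ordS_reach L (x y : 'I_L) : iter (y + L - x) (@ordS L) x = y.
Proof.
apply: val_inj; rewrite iter_ordS_val.
have hx := ltn_ord x.
rewrite addnBA; last by lia.
rewrite (addnC x) addnK modnDr modn_small //.
Qed.

Lemma closed_full L (A : {set 'I_L}) x :
  x \in A -> (forall i, i \in A -> ordS i \in A) -> forall y, y \in A.
Proof.
move=> xA cl y; rewrite -(ordS_reach x y).
elim: (y + L - x) => [|d IH] //=; exact: cl.
Qed.

Lemma iter_pred_ordS L (x : 'I_L) e : iter e (@ordS L) (iter e (@ord_pred L) x) = x.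
Proof.
elim: e => [|e IH] //; by rewrite iterSr [iter e.+1 _ x]iterS ord_predK.
Qed.

Definition P1 L (S : {set site L}) : {set 'I_L} := [set x.1 | x in S].
Definition P2 L (S : {set site L}) : {set 'I_L} := [set x.2 | x in S].
Definition starts L (A : {set 'I_L}) : {set 'I_L} := [set i in A | ord_pred i \notin A].
Definition bdn L (S : {set site L}) : nat :=
  \sum_(x : site L) (((x \in S) != (right_nb x \in S)) + ((x \in S) != (up_nb x \in S))).

Lemma starts_union L (A B : {set 'I_L}) :
  #|starts (A :|: B)| <= #|starts A| + #|starts B|.
Proof.
apply: leq_trans (leq_card_setU _ _).
apply: subset_leq_card; apply/subsetP => i; rewrite !inE.
case/andP; rewrite negb_or => /orP [] iA /andP [h1 h2].
  by rewrite iA h1.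
by rewrite iA h2 orbT.
Qed.

Definition nobond L (S1 S2 : {set site L}) :=
  forall x, (x \in S1 -> (right_nb x \notin S2) && (up_nb x \notin S2)) /\
            (x \in S2 -> (right_nb x \notin S1) && (up_nb x \notin S1)).

Lemma bd_split L (S1 S2 : {set site L}) :
  (forall x, x \in S1 -> x \notin S2) -> nobond S1 S2 ->
  bdn (S1 :|: S2) = bdn S1 + bdn S2.
Proof.
move=> dis nb; rewrite /bdn -big_split /=; apply: eq_bigr => x _.
have [n1 n2] := nb x.
have d1 := dis x; have d2 := dis (right_nb x); have d3 := dis (up_nb x).
rewrite !inE.
move: n1 n2 d1 d2 d3.
case: (x \in S1); case: (x \in S2); case: (right_nb x \in S1); case: (right_nb x \in S2);
case: (up_nb x \in S1); case: (up_nb x \in S2) => //= n1 n2 d1 d2 d3;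
  (try by have := n1 isT); (try by have := n2 isT); (try by have := d1 isT);
  (try by have := d2 isT); (try by have := d3 isT).
Qed.

Definition run L (A : {set 'I_L}) (i0 : 'I_L) : {set 'I_L} :=
  [set i | [exists d : 'I_L, (i == iter d (@ordS L) i0) &&
            [forall e : 'I_L, (e <= d) ==> (iter e (@ordS L) i0 \in A)]]].

Lemma run_sub L (A : {set 'I_L}) i0 i : i \in run A i0 -> i \in A.
Proof.
rewrite inE => /existsP [d /andP [/eqP -> /forallP H]].
by have := H d; rewrite leqnn.
Qed.

Lemma run_start L (A : {set 'I_L}) i0 : i0 \in A -> i0 \in run A i0.
Proof.
move=> iA; rewrite inE; apply/existsP.
have L0 : 0 < L by apply: leq_ltn_trans (ltn_ord i0).
exists (Ordinal L0); rewrite eqxx /=; apply/forallP => e; apply/implyP.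
by rewrite leqn0 => /eqP ->.
Qed.

Lemma run_succ L (A : {set 'I_L}) i0 i :
  i0 \in A -> i \in run A i0 -> ordS i \in A -> ordS i \in run A i0.
Proof.
move=> i0A; rewrite inE => /existsP [d /andP [/eqP ei /forallP H]] sA.
case: (ltnP d.+1 L) => hd.
  rewrite inE; apply/existsP; exists (Ordinal hd); rewrite /= ei eqxx /=.
  apply/forallP => e; apply/implyP; rewrite leq_eqVlt ltnS => /orP [/eqP ee|le].
    by rewrite ee /= -ei.
  by have := H e; rewrite le.
have dL : d.+1 = L by apply/eqP; rewrite eqn_leq hd ltn_ord.
have -> : ordS i = i0 by rewrite ei -[ordS _]/(iter d.+1 _ _) dL iter_ordS_L.
exact: run_start.
Qed.

Lemma run_pred L (A : {set 'I_L}) i0 i :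
  i0 \in starts A -> ordS i \in run A i0 -> i \in A -> i \in run A i0.
Proof.
rewrite inE => /andP [i0A i0s].
rewrite inE => /existsP [d /andP [/eqP ei /forallP H]] iA.
case: d ei H => [[|d] hd] /= ei H.
  by move: i0s; rewrite -ei ordSK iA.
have hd' : d < L by apply: ltnW.
rewrite inE; apply/existsP; exists (Ordinal hd'); rewrite /=.
move/ordS_inj: ei => ->; rewrite eqxx /=.
apply/forallP => e; apply/implyP => le.
by have := H e; rewrite (leq_trans le (leqnSn _)).
Qed.

Lemma run_other L (A : {set 'I_L}) i0 i1 :
  i0 \in starts A -> i1 \in starts A -> i0 != i1 -> i1 \notin run A i0.
Proof.
move=> _ /[!inE] /andP [i1A i1s] ne; apply/negP => /existsP [[[|d] hd] /andP [/eqP ei /forallP H]].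
  by move: ne; rewrite ei eqxx.
have hd' : d < L by apply: ltnW.
have := H (Ordinal hd'); rewrite /= leqnSn /=.
by move: i1s; rewrite ei /= ordSK => /negbTE ->.
Qed.

Lemma inP1 L (S : {set site L}) x : x \in S -> x.1 \in P1 S.
Proof. by move=> xS; apply/imsetP; exists x. Qed.
Lemma inP2 L (S : {set site L}) x : x \in S -> x.2 \in P2 S.
Proof. by move=> xS; apply/imsetP; exists x. Qed.

Definition is_split L (S S1 S2 : {set site L}) :=
  [/\ S = S1 :|: S2, (forall x, x \in S1 -> x \notin S2), nobond S1 S2,
      S1 != set0 & S2 != set0].

Lemma split1 L (S : {set site L}) : 1 < #|starts (P1 S)| ->
  exists S1 S2, is_split S S1 S2.
Proof.
case/card_gt1P => i0 [i1 [h0 h1 ne]].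
set A := P1 S.
have i0A : i0 \in A by move: h0; rewrite inE => /andP [].
have r0 : i0 \in run A i0 := run_start i0A.
have rS : forall i, i \in run A i0 -> ordS i \in A -> ordS i \in run A i0 :=
  fun i => @run_succ _ A i0 i i0A.
have rP : forall i, ordS i \in run A i0 -> i \in A -> i \in run A i0 :=
  fun i => @run_pred _ A i0 i h0.
have r1 : i1 \notin run A i0 := run_other h0 h1 ne.
move: (run A i0) r0 rS rP r1 => R r0 rS rP r1.
exists [set x in S | x.1 \in R], [set x in S | x.1 \notin R].
split.
- apply/setP => x; by rewrite !inE -andb_orr orbN andbT.
- by move=> x; rewrite !inE => /andP [_ ->]; rewrite andbF.
- move=> x; split; rewrite !inE.
    move=> /andP [xS xr]; rewrite /right_nb /up_nb /= xr andbF andbT.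
    apply/negP => /andP [rS' rn]; move/negP: rn; apply.
    apply: rS => //; exact: (inP1 rS').
  move=> /andP [xS xr]; rewrite /right_nb /up_nb /= (negbTE xr) andbF andbT.
  apply/negP => /andP [rS' rn]; move/negP: xr; apply.
  apply: rP => //; exact: (inP1 xS).
- move: i0A => /imsetP [x xS ex]; apply/set0Pn; exists x.
  by rewrite inE xS -ex r0.
- move: h1; rewrite inE => /andP [/imsetP [x xS ex] _]; apply/set0Pn; exists x.
  by rewrite inE xS -ex r1.
Qed.

Definition swp L (x : site L) : site L := (x.2, x.1).
Lemma swpK L : involutive (@swp L). Proof. by case. Qed.
Definition swapS L (S : {set site L}) : {set site L} := [set x | swp x \in S].

Lemma swapSK L (S : {set site L}) : swapS (swapS S) = S.
Proof. by apply/setP => x; rewrite !inE swpK. Qed.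

Lemma card_swapS L (S : {set site L}) : #|swapS S| = #|S|.
Proof.
have -> : swapS S = (@swp L) @^-1: S by apply/setP => x; rewrite !inE.
apply: card_preimset; exact: (can_inj (@swpK L)).
Qed.

Lemma bdn_swapS L (S : {set site L}) : bdn (swapS S) = bdn S.
Proof.
rewrite /bdn (reindex_inj (can_inj (@swpK L))) /=.
apply: eq_bigr => x _; rewrite !inE swpK.
case: x => a b; rewrite /swp /right_nb /up_nb /=; by rewrite addnC.
Qed.

Lemma P1_swapS L (S : {set site L}) : P1 (swapS S) = P2 S.
Proof.
apply/setP => i; apply/imsetP/imsetP => [[x]|[x]].
  by rewrite inE => xS ->; exists (swp x).
by move=> xS ->; exists (swp x); rewrite // inE swpK.
Qed.

Lemma P2_swapS L (S : {set site L}) : P2 (swapS S) = P1 S.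
Proof. by rewrite -[in RHS](swapSK S) P1_swapS. Qed.

Lemma split2 L (S : {set site L}) : 1 < #|starts (P2 S)| ->
  exists S1 S2, is_split S S1 S2.
Proof.
rewrite -P1_swapS => /split1 [T1 [T2 [e d nb n1 n2]]].
exists (swapS T1), (swapS T2); split.
- by rewrite -[LHS]swapSK e; apply/setP => x; rewrite !inE.
- by move=> x; rewrite !inE; apply: d.
- case=> a b; have [a1 a2] := nb (b, a); rewrite !inE; split.
    move=> /a1; rewrite /swp /right_nb /up_nb /=.
    by case/andP => -> ->.
  move=> /a2; rewrite /swp /right_nb /up_nb /=.
  by case/andP => -> ->.
- by apply: contra n1 => /eqP e1; rewrite -(swapSK T1) e1; apply/eqP/setP => x; rewrite !inE.
- by apply: contra n2 => /eqP e1; rewrite -(swapSK T2) e1; apply/eqP/setP => x; rewrite !inE.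
Qed.

Lemma cyc_bd L (A : {set 'I_L}) x y : x \in A -> y \notin A ->
  2 <= \sum_(i : 'I_L) ((i \in A) != (ordS i \in A)).
Proof.
move=> xA yA.
case: (boolP [exists i, (i \in A) && (ordS i \notin A)]); last first.
  move/existsPn => H; move/negP: yA; elim; apply: (closed_full xA) => i iA.
  by have := H i; rewrite iA /= negbK.
move/existsP => [i /andP [iA iS]].
case: (boolP [exists j, (j \notin A) && (ordS j \in A)]); last first.
  move/existsPn => H.
  have cl : forall z, z \in ~: A.
    apply: (closed_full (x := y)); first by rewrite inE.
    move=> j; rewrite !inE => jA; have := H j; rewrite jA /=; by case: (ordS j \in A).
  by have := cl i; rewrite inE iA.
move/existsP => [j /andP [jA jS]].
have ij : j != i by apply: contraNneq jA => ->.
rewrite (bigD1 i) //= (bigD1 j) //= iA (negbTE iS) (negbTE jA) jS /=.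
by rewrite addnA leq_addr.
Qed.

Definition hbd L (S : {set site L}) : nat :=
  \sum_(x : site L) ((x \in S) != (right_nb x \in S)).

Lemma bdn_hv L (S : {set site L}) : bdn S = hbd S + hbd (swapS S).
Proof.
rewrite /bdn /hbd big_split /=; congr (_ + _).
rewrite (reindex_inj (can_inj (@swpK L))) /=.
by apply: eq_bigr => -[a b] _; rewrite !inE.
Qed.

Lemma hbd_ge L (S : {set site L}) : #|S| < L -> 2 * #|P2 S| <= hbd S.
Proof.
move=> SL.
rewrite /hbd (eq_bigr (fun x : site L => nat_of_bool (((x.1, x.2) \in S) != (right_nb (x.1, x.2) \in S))));
  last by case.
rewrite -(pair_bigA _ (fun i j => nat_of_bool (((i, j) \in S) != (right_nb (i, j) \in S)))) /=.
rewrite exchange_big /= mulnC -sum_nat_const big_mkcond /=; apply: leq_sum => j _.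
case: ifP => // /imsetP [[a b] xS /= ej].
set A := [set i | (i, j) \in S].
have : exists y, y \notin A.
  case: (boolP [exists y, y \notin A]) => [/existsP //|/existsPn H].
  have : #|A| <= #|S|.
    have -> : A = (fun x : site L => x.1) @: [set x in S | x.2 == j].
      apply/setP => i; rewrite inE; apply/idP/imsetP => [iS|[x]].
        by exists (i, j); rewrite // inE iS eqxx.
      by rewrite inE => /andP [yS /eqP <-] ->; case: x yS.
    apply: leq_trans (leq_imset_card _ _) _; apply: subset_leq_card.
    by apply/subsetP => x; rewrite inE => /andP [].
  have -> : #|A| = L.
    have -> : A = setT by apply/setP => i; rewrite in_setT; exact: negbNE (H i).
    by rewrite cardsT card_ord.
  by move=> H2; move: SL; rewrite ltnNge H2.
case=> y yA.
have aA : a \in A by rewrite inE ej.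
have := cyc_bd aA yA.
move=> H2; apply: leq_trans H2 _; apply: eq_leq; apply: eq_bigr => i _.
by rewrite !inE.
Qed.

Lemma bdn_ge L (S : {set site L}) : #|S| < L -> 2 * (#|P1 S| + #|P2 S|) <= bdn S.
Proof.
move=> SL; rewrite bdn_hv mulnDr addnC; apply: leq_add; first exact: hbd_ge.
by rewrite -P2_swapS; apply: hbd_ge; rewrite card_swapS.
Qed.

Lemma card_le_P12 L (S : {set site L}) : #|S| <= #|P1 S| * #|P2 S|.
Proof.
rewrite -cardsX; apply: subset_leq_card; apply/subsetP => -[a b] xS.
by rewrite inE /= (inP1 xS) (inP2 xS).
Qed.

Lemma natk n0 s k : 1 <= n0 -> 2 <= s -> 4 * k <= s * s -> k <= n0 * n0 + n0 + 1 ->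
  k <= n0 * (s - 1).
Proof. move=> *. nia. Qed.

Lemma four_le p q k : k <= p * q -> 4 * k <= (p + q) * (p + q).
Proof. move=> H. have : 0 <= (p - q) * (p - q) + (q - p) * (q - p) by []. nia. Qed.

Local Open Scope R_scope.

Lemma INR2 : INR 2 = 2. Proof. simpl; ring. Qed.

Definition FS (h : R) L (S : {set site L}) : R := INR (bdn S) - h * INR #|S|.

Lemma FS_ge2 (h : R) (m : nat) L (S : {set site L}) :
  0 < h -> h * INR m <= 2 -> (1 <= m)%N -> (#|S| <= m * m + m + 1)%N -> (#|S| < L)%N ->
  S != set0 -> 2 <= FS h S.
Proof.
move=> h0 hm m1 SM SL /set0Pn [x xS].
have k1 : (1 <= #|S|)%N by rewrite card_gt0; apply/set0Pn; exists x.
have kpq := card_le_P12 S.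
have p1 : (1 <= #|P1 S|)%N by rewrite card_gt0; apply/set0Pn; exists x.1; exact: inP1.
have q1 : (1 <= #|P2 S|)%N by rewrite card_gt0; apply/set0Pn; exists x.2; exact: inP2.
have bd := bdn_ge SL.
have kb : (#|S| <= m * (#|P1 S| + #|P2 S| - 1))%N.
  apply: natk; [exact: m1 | lia | exact: four_le | exact: SM].
rewrite /FS.
have e1 : 2 * INR (#|P1 S| + #|P2 S|) <= INR (bdn S).
  by rewrite -INR2 -mult_INR; apply: le_INR; apply/leP.
have e2 : INR #|S| <= INR m * (INR (#|P1 S| + #|P2 S|) - 1).
  rewrite -INR_1 -minus_INR; last by apply/leP; lia.
  by rewrite -mult_INR; apply: le_INR; apply/leP.
have e3 : h * INR #|S| <= h * INR m * (INR (#|P1 S| + #|P2 S|) - 1).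
  rewrite Rmult_assoc; apply: Rmult_le_compat_l => //; lra.
have e4 : 1 <= INR (#|P1 S| + #|P2 S|).
  rewrite -INR_1; apply: le_INR; apply/leP; lia.
have e5 : h * INR m * (INR (#|P1 S| + #|P2 S|) - 1) <= 2 * (INR (#|P1 S| + #|P2 S|) - 1).
  apply: Rmult_le_compat_r => //; lra.
lra.
Qed.

Lemma P1U L (S1 S2 : {set site L}) : P1 (S1 :|: S2) = P1 S1 :|: P1 S2.
Proof. exact: imsetU. Qed.
Lemma P2U L (S1 S2 : {set site L}) : P2 (S1 :|: S2) = P2 S1 :|: P2 S2.
Proof. exact: imsetU. Qed.

Lemma card_split L (S S1 S2 : {set site L}) : is_split S S1 S2 ->
  [/\ #|S| = (#|S1| + #|S2|)%N, (#|S1| < #|S|)%N & (#|S2| < #|S|)%N].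
Proof.
case=> -> d _ n1 n2.
have e : #|S1 :|: S2| = (#|S1| + #|S2|)%N.
  rewrite cardsU; have -> : S1 :&: S2 = set0.
    by apply/setP => x; rewrite !inE; case: (boolP (x \in S1)) => // /d /negbTE ->.
  by rewrite cards0 subn0.
rewrite e; split => //.
  by rewrite -{1}(addn0 #|S1|) ltn_add2l card_gt0.
by rewrite -{1}(add0n #|S2|) ltn_add2r card_gt0.
Qed.

Lemma FS_split (h : R) L (S S1 S2 : {set site L}) : is_split S S1 S2 ->
  FS h S = FS h S1 + FS h S2.
Proof.
move=> sp; have [e _ _] := card_split sp; case: sp => eS d nb _ _.
rewrite /FS e eS bd_split // plus_INR plus_INR; ring.
Qed.

Lemma FS_ge (h : R) (m : nat) L (S : {set site L}) :
  0 < h -> h * INR m <= 2 -> (1 <= m)%N -> (#|S| <= m * m + m + 1)%N -> (#|S| < L)%N ->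
  INR (#|starts (P1 S)| + #|starts (P2 S)|) <= FS h S.
Proof.
move=> h0 hm m1.
have [n] := ubnP #|S|; elim: n S => // n IH S Sn SM SL.
case: (boolP (S == set0)) => [/eqP ->|Sne].
  rewrite /P1 /P2 !imset0.
  have -> : starts (set0 : {set 'I_L}) = set0 by apply/setP => i; rewrite !inE.
  rewrite cards0 /FS cards0 /= Rmult_0_r Rminus_0_r; exact: pos_INR.
have rec : forall S1 S2, is_split S S1 S2 ->
    INR (#|starts (P1 S)| + #|starts (P2 S)|) <= FS h S.
  move=> S1 S2 sp; have [e l1 l2] := card_split sp.
  rewrite (FS_split h sp).
  have i1 := IH S1 (leq_trans l1 Sn) (leq_trans (ltnW l1) SM) (leq_ltn_trans (ltnW l1) SL).
  have i2 := IH S2 (leq_trans l2 Sn) (leq_trans (ltnW l2) SM) (leq_ltn_trans (ltnW l2) SL).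
  case: sp => eS _ _ _ _.
  have s1 := starts_union (P1 S1) (P1 S2).
  have s2 := starts_union (P2 S1) (P2 S2).
  rewrite eS P1U P2U.
  apply: Rle_trans _ (Rplus_le_compat _ _ _ _ i1 i2).
  rewrite -plus_INR; apply: le_INR; apply/leP; lia.
case: (ltnP 1 #|starts (P1 S)|) => [/split1 [S1 [S2 sp]]|a1]; first exact: rec sp.
case: (ltnP 1 #|starts (P2 S)|) => [/split2 [S1 [S2 sp]]|a2]; first exact: rec sp.
apply: Rle_trans (FS_ge2 h0 hm m1 SM SL Sne).
rewrite -INR2; apply: le_INR; apply/leP; lia.
Qed.


Local Close Scope R_scope.
Local Open Scope R_scope.

Lemma Rsum_le (I : finType) (P : pred I) (F G : I -> R) :
  (forall i, P i -> F i <= G i) -> Rsum P F <= Rsum P G.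
Proof.
move=> H; rewrite /Rsum; apply: (big_ind2 (fun a b => a <= b)) => //.
  exact: Rle_refl.
by move=> *; apply: Rplus_le_compat.
Qed.

Lemma INR_sum (I : finType) (P : pred I) (F : I -> nat) :
  INR (\sum_(i | P i) F i) = Rsum P (fun i => INR (F i)).
Proof. by rewrite /Rsum; apply: (big_morph INR plus_INR). Qed.

Lemma sum_card (T : finType) (A : {set T}) : (\sum_(x : T) (x \in A : nat) = #|A|)%N.
Proof. by rewrite -sum1_card [RHS]big_mkcond; apply: eq_bigr => x _; case: (x \in A). Qed.

Definition S1c L (s : config L) : {set site L} := [set x | s x != spin_m1].
Definition S2c L (s : config L) : {set site L} := [set x | val (s x) == 2%N].

Lemma bond_ge (a b : spin) :
  INR ((a != spin_m1) != (b != spin_m1)) + INR ((val a == 2%N) != (val b == 2%N))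
  <= (spin_val b - spin_val a) ^ 2.
Proof.
case: a => [[|[|[|?]]] ?] //; case: b => [[|[|[|?]]] ?] //; rewrite /spin_val /=; lra.
Qed.

Lemma dH_ge (h : R) L (s : config L) :
  FS h (S1c s) + FS h (S2c s) <= Ham h s - Ham h (minus1 L).
Proof.
rewrite /Ham /FS.
have T0 : Rsum xpredT (fun x : site L =>
   (spin_val (minus1 L (right_nb x)) - spin_val (minus1 L x)) ^ 2 +
   (spin_val (minus1 L (up_nb x)) - spin_val (minus1 L x)) ^ 2) = 0.
  rewrite /Rsum big1 // => x _; rewrite !ffunE; ring.
have V : Rsum xpredT (fun x : site L => spin_val (s x)) - Rsum xpredT (fun x : site L => spin_val (minus1 L x))
         = INR #|S1c s| + INR #|S2c s|.
  rewrite -!sum_card !INR_sum /Rsum -big_split /=.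
  have -> : \big[Rplus/R0]_(x | xpredT x) spin_val (s x) =
            \big[Rplus/R0]_(x | xpredT x) ((INR (x \in S1c s) + INR (x \in S2c s)) + spin_val (minus1 L x)).
    apply: eq_bigr => x _; rewrite !inE ffunE.
    case: (s x) => [[|[|[|?]]] ?] //; rewrite /spin_val /=; lra.
  rewrite big_split /=; unfold Rminus; rewrite Rplus_assoc Rplus_opp_r Rplus_0_r; reflexivity.
have B : INR (bdn (S1c s)) + INR (bdn (S2c s)) <= Rsum xpredT (fun x : site L =>
   (spin_val (s (right_nb x)) - spin_val (s x)) ^ 2 +
   (spin_val (s (up_nb x)) - spin_val (s x)) ^ 2).
  rewrite /bdn !INR_sum /Rsum -big_split; apply: Rsum_le => x _.
  rewrite !plus_INR; have := bond_ge (s x) (s (right_nb x)); have := bond_ge (s x) (s (up_nb x)).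
  rewrite !inE => H1 H2; simpl in H1, H2 |- *; lra.
rewrite T0.
move: V B.
set Vs := Rsum xpredT (fun x : site L => spin_val (s x)).
set Vm := Rsum xpredT (fun x : site L => spin_val (minus1 L x)).
set T := Rsum xpredT _.
move=> V B.
have HV : h * Vs - h * Vm = h * (INR #|S1c s| + INR #|S2c s|).
  by rewrite -V; ring.
lra.
Qed.


Local Close Scope R_scope.

Lemma iter_inj T (f : T -> T) n : injective f -> injective (iter n f).
Proof. move=> fi; elim: n => [|n IH] x y //= /fi; exact: IH. Qed.

Lemma ordS_reachm L (x y : 'I_L) : iter ((y + L - x) %% L) (@ordS L) x = y.
Proof.
apply: val_inj; rewrite iter_ordS_val modnDmr.
have hx := ltn_ord x.
rewrite addnBA; last by lia.
rewrite (addnC x) addnK modnDr modn_small //.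
Qed.

Lemma back L (A : {set 'I_L}) x : x \in A -> #|A| < L ->
  exists i d, [/\ i \in starts A, d < #|A| & iter d (@ordS L) i = x].
Proof.
move=> xA AL.
have [z zA] : exists z, z \notin A.
  case: (boolP [exists z, z \notin A]) => [/existsP //|/existsPn H].
  have : A = setT by apply/setP => i; rewrite in_setT; exact: negbNE (H i).
  by move=> eA; move: AL; rewrite eA cardsT card_ord ltnn.
pose y e := iter e (@ord_pred L) x.
have yS : forall e, iter e (@ordS L) (y e) = x by move=> e; exact: iter_pred_ordS.
set e0 := (x + L - z) %% L.
have e0L : e0 < L by apply: ltn_pmod; apply: leq_ltn_trans (ltn_ord x).
have ye0 : y e0 = z.
  have := yS e0; rewrite -{1}(ordS_reachm z x) -/e0; exact: (iter_inj (@ordS_inj L)).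
have e0pos : 0 < e0.
  rewrite lt0n; apply/negP => /eqP e00; move: zA; rewrite -ye0 e00 /= xA //.
have exP : exists e, y e.+1 \notin A by exists e0.-1; rewrite prednK // ye0.
case: (ex_minnP exP) => es yes esmin.
have esL : es < L.
  apply: leq_ltn_trans e0L; apply: leq_trans (esmin e0.-1 _) (leq_pred _).
  by rewrite prednK // ye0.
have inA : forall e, e <= es -> y e \in A.
  case=> [|e] le //; apply/negPn/negP => ne.
  by have := esmin e ne; rewrite leqNgt le.
exists (y es), es; split; last exact: yS.
- by rewrite inE (inA es (leqnn _)) /=; exact: yes.
- have inj : injective (fun e : 'I_es.+1 => y e).
    move=> [e1 h1] [e2 h2] /= eq; apply: val_inj => /=.
    have := yS e1; rewrite eq -{1}(yS e2) => /(congr1 val).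
    rewrite !iter_ordS_val => /eqP; rewrite eqn_modDl.
    by rewrite !modn_small ?(leq_ltn_trans _ esL) // => /eqP.
  have := card_imset (mem 'I_es.+1) inj; rewrite card_ord => <-.
  apply: subset_leq_card; apply/subsetP => w /imsetP [e _ ->]; apply: inA.
  by rewrite -ltnS.
Qed.


Local Close Scope R_scope.
Local Open Scope R_scope.

Lemma INR_expn m n : INR (m ^ n) = INR m ^ n.
Proof. elim: n => [|n IH] //=; by rewrite expnS mult_INR IH. Qed.

Lemma Rsum_ge0 (I : finType) (P : pred I) (F : I -> R) :
  (forall i, P i -> 0 <= F i) -> 0 <= Rsum P F.
Proof.
move=> H; rewrite /Rsum; apply: (big_ind (fun a => 0 <= a)) => //.
  exact: Rle_refl.
by move=> *; apply: Rplus_le_le_0_compat.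
Qed.

Lemma Rsum_const_le (I : finType) (P : pred I) (c : R) (K : nat) :
  0 <= c -> (#|[set i | P i]| <= K)%N -> Rsum P (fun _ => c) <= INR K * c.
Proof.
move=> c0 hK.
have -> : Rsum P (fun _ => c) = INR #|[set i | P i]| * c.
  rewrite -sum1_card INR_sum /Rsum big_distrl /=.
  apply: eq_big => [i|i _]; first by rewrite inE.
  by rewrite /= Rmult_1_l.
apply: Rmult_le_compat_r => //; apply: le_INR; exact/leP.
Qed.

Lemma S1c_S2c_inj L (s t : config L) : S1c s = S1c t -> S2c s = S2c t -> s = t.
Proof.
move=> e1 e2; apply/ffunP => x.
have h1 : (s x != spin_m1) = (t x != spin_m1).
  by have := congr1 (fun S : {set site L} => x \in S) e1; rewrite /= !inE.
have h2 : (val (s x) == 2%N) = (val (t x) == 2%N).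
  by have := congr1 (fun S : {set site L} => x \in S) e2; rewrite /= !inE.
move: h1 h2; case: (s x) => [[|[|[|?]]] ?] //; case: (t x) => [[|[|[|?]]] ?] //=;
  by move=> *; apply: val_inj.
Qed.

Lemma count_fiber1 L (S : {set site L}) :
  (#|[set s : config L | S1c s == S]| <= 2 ^ #|S|)%N.
Proof.
rewrite -card_powerset.
have inj : {in [set s : config L | S1c s == S] &, injective (@S2c L)}.
  move=> s t; rewrite !inE => /eqP es /eqP et e2; apply: S1c_S2c_inj => //.
  by rewrite es et.
rewrite -(card_in_imset inj); apply: subset_leq_card; apply/subsetP => A /imsetP [s].
rewrite inE => /eqP <- ->; rewrite inE; apply/subsetP => x; rewrite !inE => /eqP e.
by apply/eqP => e'; move: e; rewrite e'.
Qed.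

Lemma sum_configs L (M : nat) (F : {set site L} -> R) :
  (forall S, 0 <= F S) ->
  Rsum (fun s : config L => (S1c s != set0) && (#|S1c s| <= M)%N) (fun s => F (S1c s))
  <= INR (2 ^ M) * Rsum (fun S : {set site L} => (S != set0) && (#|S| <= M)%N) F.
Proof.
move=> F0; rewrite /Rsum (partition_big (@S1c L) (fun S => (S != set0) && (#|S| <= M)%N)) //=.
rewrite big_distrr /=; apply: Rsum_le => S /andP [_ SM].
have -> : \big[Rplus/R0]_(s | ((S1c s != set0) && (#|S1c s| <= M)%N) && (S1c s == S)) F (S1c s)
   = Rsum (fun s : config L => ((S1c s != set0) && (#|S1c s| <= M)%N) && (S1c s == S)) (fun _ => F S).
  by apply: eq_bigr => s /andP [_ /eqP ->].
apply: Rsum_const_le => //.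
apply: (@leq_trans (2 ^ #|S|)); last by rewrite leq_pexp2l.
apply: (@leq_trans #|[set s : config L | S1c s == S]|); last exact: count_fiber1.
  apply: subset_leq_card; apply/subsetP => s; rewrite !inE => /andP [_ ->] //.

Qed.

Lemma sub_P12 L (S : {set site L}) : S \subset setX (P1 S) (P2 S).
Proof. by apply/subsetP => x xS; rewrite inE (inP1 xS) (inP2 xS). Qed.

Definition gS L (S : {set site L}) : nat := (#|starts (P1 S)| + #|starts (P2 S)|)%N.

Definition QA L (M : nat) (A : {set 'I_L}) : bool := (A != set0) && (#|A| <= M)%N.

Lemma sum_sets L (M : nat) (q : R) : 0 <= q ->
  Rsum (fun S : {set site L} => (S != set0) && (#|S| <= M)%N) (fun S => q ^ gS S)
  <= INR (2 ^ (M * M)) * (Rsum (@QA L M) (fun A => q ^ #|starts A|) *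
                         Rsum (@QA L M) (fun A => q ^ #|starts A|)).
Proof.
move=> q0.
rewrite /Rsum (partition_big (fun S : {set site L} => (P1 S, P2 S))
   (fun p => QA M p.1 && QA M p.2)) /=; last first.
  move=> S /andP [/set0Pn [x xS] SM]; rewrite /QA /=.
  rewrite (leq_trans (leq_imset_card _ _) SM) (leq_trans (leq_imset_card _ _) SM) !andbT.
  by apply/andP; split; apply/set0Pn; [exists x.1; exact: inP1 | exists x.2; exact: inP2].
rewrite big_distrlr pair_big /= big_distrr /=.
apply: Rsum_le => -[A B] /andP [QAa QBb] /=.
have -> : \big[Rplus/R0]_(S | ((S != set0) && (#|S| <= M)%N) && ((P1 S, P2 S) == (A, B))) q ^ gS S
   = Rsum (fun S : {set site L} => ((S != set0) && (#|S| <= M)%N) && ((P1 S, P2 S) == (A, B)))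
       (fun _ => q ^ #|starts A| * q ^ #|starts B|).
  apply: eq_bigr => S /andP [_ /eqP [<- <-]]; by rewrite /gS pow_add.
apply: Rsum_const_le; first by apply: Rmult_le_pos; apply: pow_le.
apply: (@leq_trans (2 ^ (#|A| * #|B|))).
  rewrite -cardsX -card_powerset; apply: subset_leq_card; apply/subsetP => S.
  rewrite !inE => /andP [_ /eqP [<- <-]]; exact: sub_P12.
rewrite leq_pexp2l //; apply: leq_mul.
  by case/andP: QAa.
by case/andP: QBb.
Qed.

Definition Wst L M (St : {set 'I_L}) : {set 'I_L} :=
  (fun p : 'I_L * 'I_M => iter p.2 (@ordS L) p.1) @: setX St setT.

Lemma sum_A L (M : nat) (q : R) : 0 <= q -> (M < L)%N ->
  Rsum (@QA L M) (fun A => q ^ #|starts A|)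
  <= Rsum (fun St : {set 'I_L} => St != set0) (fun St => (INR (2 ^ M) * q) ^ #|St|).
Proof.
move=> q0 ML.
rewrite /Rsum (partition_big (@starts L) (fun St : {set 'I_L} => St != set0)) /=; last first.
  move=> A /andP [/set0Pn [x xA] AM].
  have [i [d [iS _ _]]] := back xA (leq_ltn_trans AM ML).
  by apply/set0Pn; exists i.
apply: Rsum_le => St _.
have -> : \big[Rplus/R0]_(A | QA M A && (starts A == St)) q ^ #|starts A|
   = Rsum (fun A => QA M A && (starts A == St)) (fun _ => q ^ #|St|).
  by apply: eq_bigr => A /andP [_ /eqP ->].
rewrite Rpow_mult_distr -INR_expn -expnM.
apply: Rsum_const_le; first exact: pow_le.
apply: (@leq_trans (2 ^ #|Wst M St|)); last first.
  rewrite leq_pexp2l // mulnC; apply: leq_trans (leq_imset_card _ _) _.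
  by rewrite cardsX cardsT card_ord.
rewrite -card_powerset; apply: subset_leq_card; apply/subsetP => A.
rewrite !inE => /andP [/andP [_ AM] /eqP eS]; apply/subsetP => x xA.
have [i [d [iS dA ex]]] := back xA (leq_ltn_trans AM ML).
have dM : (d < M)%N by apply: leq_trans dA AM.
apply/imsetP; exists (i, Ordinal dM) => //.
by rewrite inE /= -eS iS in_setT.
Qed.

Lemma ffact_le_exp n k : (n ^_ k <= n ^ k)%N.
Proof.
elim: k => [|k IH] //; rewrite ffactnSr expnSr; apply: leq_mul => //; exact: leq_subr.
Qed.

Lemma bin_le_exp n k : ('C(n, k) <= n ^ k)%N.
Proof.
apply: leq_trans (ffact_le_exp n k); rewrite -bin_ffact; apply: leq_pmulr; exact: fact_gt0.
Qed.

Lemma geo (z : R) n : 0 <= z -> 2 * z <= 1 ->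
  Rsum (fun k : 'I_n.+1 => (0 < k)%N) (fun k => z ^ k) <= 2 * z - 2 * z ^ n.+1.
Proof.
move=> z0 z1; elim: n => [|n IH].
  rewrite /Rsum big_mkcond big_ord_recl big_ord0 /=. lra.
rewrite /Rsum big_mkcond big_ord_recr /= -big_mkcond /=.
have -> : \big[Rplus/R0]_(i < n.+1 | (0 < widen_ord (leqnSn n.+1) i)%N) z ^ widen_ord (leqnSn n.+1) i
   = Rsum (fun k : 'I_n.+1 => (0 < k)%N) (fun k => z ^ k) by [].
have h1 : 2 * z ^ n.+2 <= z ^ n.+1.
  rewrite -(tech_pow_Rmult z n.+1); have := pow_le z n.+1 z0.
  move: (z ^ n.+1) => w; nra.
have : 0 <= z ^ n.+1 by apply: pow_le.
move: IH h1; rewrite /Rsum /=.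
move: (\big[Rplus/R0]_(i < n.+1 | (0 < i)%N) z ^ i) => S.
move: (z ^ n) => w; nra.
Qed.

Lemma sum_St L (y : R) : 0 <= y -> 2 * (INR L * y) <= 1 ->
  Rsum (fun St : {set 'I_L} => St != set0) (fun St => y ^ #|St|) <= 2 * (INR L * y).
Proof.
move=> y0 hy.
have cardL : forall St : {set 'I_L}, (#|St| < L.+1)%N.
  by move=> St; rewrite ltnS; apply: leq_trans (max_card _) _; rewrite card_ord.
rewrite /Rsum (partition_big (fun St : {set 'I_L} => (inord #|St| : 'I_L.+1))
                 (fun k : 'I_L.+1 => (0 < k)%N)) /=; last first.
  by move=> St St0; rewrite inordK // card_gt0.
apply: (@Rle_trans _ (Rsum (fun k : 'I_L.+1 => (0 < k)%N) (fun k => (INR L * y) ^ k))).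
  apply: Rsum_le => k _.
  have -> : \big[Rplus/R0]_(St : {set 'I_L} | (St != set0) && (inord #|St| == k)) y ^ #|St|
     = Rsum (fun St : {set 'I_L} => (St != set0) && (inord #|St| == k)) (fun _ => y ^ k).
    apply: eq_bigr => St /andP [_ /eqP <-]; by rewrite inordK.
  rewrite Rpow_mult_distr -INR_expn.
  apply: Rsum_const_le; first exact: pow_le.
  apply: leq_trans (bin_le_exp L k).
  apply: (@leq_trans #|[set St : {set 'I_L} | #|St| == k]|); last by rewrite card_draws card_ord.
  apply: subset_leq_card; apply/subsetP => St.
  by rewrite !inE => /andP [_ /eqP <-]; rewrite inordK.
have z0 : 0 <= INR L * y by apply: Rmult_le_pos => //; apply: pos_INR.
have := geo L z0 hy; have := pow_le _ L.+1 z0; lra.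
Qed.


Local Close Scope R_scope.
Local Open Scope R_scope.

Lemma exp_mono x y : x <= y -> exp x <= exp y.
Proof.
case/Rle_lt_or_eq_dec => [/exp_increasing/Rlt_le //|->]; exact: Rle_refl.
Qed.

Lemma exp_pow_INR x n : exp x ^ n = exp (INR n * x).
Proof.
elim: n => [|n IH]; first by rewrite /= Rmult_0_l exp_0.
rewrite -tech_pow_Rmult IH -exp_plus S_INR; congr exp; ring.
Qed.

Lemma weight_le (h beta : R) (m : nat) L (s : config L) :
  0 < h -> h * INR m <= 2 -> (1 <= m)%N -> (m * m + m + 1 < L)%N -> 0 < beta ->
  (#|S1c s| <= m * m + m + 1)%N ->
  exp (- (beta * (Ham h s - Ham h (minus1 L)))) <= exp (- beta) ^ gS (S1c s).
Proof.
move=> h0 hm m1 ML b0 SM.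
have f1 := FS_ge h0 hm m1 SM (leq_ltn_trans SM ML).
have S21 : (#|S2c s| <= #|S1c s|)%N.
  apply: subset_leq_card; apply/subsetP => x; rewrite !inE; by case: (s x) => [[|[|[|?]]] ?].
have f2 := FS_ge h0 hm m1 (leq_trans S21 SM) (leq_ltn_trans (leq_trans S21 SM) ML).
have g0 := pos_INR (#|starts (P1 (S2c s))| + #|starts (P2 (S2c s))|).
have dH := dH_ge h s.
rewrite exp_pow_INR; apply: exp_mono.
rewrite /gS.
move: (INR _) (INR _) f1 f2 g0 dH => a b f1 f2 g0 dH.
nra.
Qed.

Lemma main_bound (h beta : R) (m : nat) L :
  0 < h -> h * INR m <= 2 -> (1 <= m)%N -> (m * m + m + 1 < L)%N -> 0 < beta ->
  2 * (INR L * (INR (2 ^ (m * m + m + 1)) * exp (- beta))) <= 1 ->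
  Rsum (fun s : config L => (S1c s != set0) && (#|S1c s| <= m * m + m + 1)%N)
       (fun s => exp (- (beta * (Ham h s - Ham h (minus1 L)))))
  <= INR (2 ^ (m * m + m + 1)) * (INR (2 ^ ((m * m + m + 1) * (m * m + m + 1))) *
      ((2 * (INR L * (INR (2 ^ (m * m + m + 1)) * exp (- beta)))) *
       (2 * (INR L * (INR (2 ^ (m * m + m + 1)) * exp (- beta)))))).
Proof.
move=> h0 hm m1 ML b0 hy.
set M := (m * m + m + 1)%N in ML hy *.
set q := exp (- beta).
have q0 : 0 <= q by apply: Rlt_le; apply: exp_pos.
have y0 : 0 <= INR (2 ^ M) * q by apply: Rmult_le_pos => //; apply: pos_INR.
apply: (@Rle_trans _ (Rsum (fun s : config L => (S1c s != set0) && (#|S1c s| <= M)%N)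
                           (fun s => q ^ gS (S1c s)))).
  apply: Rsum_le => s; case/andP => _ SM; exact: (weight_le h0 hm m1 ML b0 SM).
apply: (Rle_trans _ _ _ (sum_configs M (fun S : {set site L} => pow_le q (gS S) q0))).
apply: Rmult_le_compat_l; first exact: pos_INR.
apply: (Rle_trans _ _ _ (sum_sets L M q0)).
apply: Rmult_le_compat_l; first exact: pos_INR.
have sA := sum_A (L:=L) (M:=M) q0 ML.
have sS := sum_St y0 hy.
have a0 : 0 <= Rsum (@QA L M) (fun A => q ^ #|starts A|).
  by apply: Rsum_ge0 => A _; apply: pow_le.
apply: Rmult_le_compat => //; exact: (Rle_trans _ _ _ sA sS).
Qed.


Local Close Scope R_scope.
Local Open Scope R_scope.

Lemma n0_facts (h : R) : 0 < h < 1 -> (1 <= n0 h)%N /\ h * INR (n0 h) <= 2.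
Proof.
move=> [h0 h1].
have r2 : 2 < 2 / h.
  apply: (Rmult_lt_reg_r h) => //; rewrite /Rdiv Rmult_assoc Rinv_l; lra.
have [b1 b2] := base_Int_part (2 / h).
have z1 : (1 < Int_part (2 / h))%Z by apply: lt_IZR; lra.
have e : INR (n0 h) = IZR (Int_part (2 / h)).
  rewrite /n0 INR_IZR_INZ Z2Nat.id //; lia.
split.
  apply/leP; rewrite /n0; lia.
rewrite e; apply: (Rle_trans _ (h * (2 / h))).
  apply: Rmult_le_compat_l => //; lra.
rewrite /Rdiv -Rmult_assoc (Rmult_comm h 2) Rmult_assoc Rinv_r; lra.
Qed.

Lemma ratio_eq (h beta : R) L (A : pred (config L)) :
  mu h beta A / mu h beta (pred1 (minus1 L))
  = Rsum A (fun s => exp (- (beta * (Ham h s - Ham h (minus1 L))))).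
Proof.
rewrite /mu.
have w0 := exp_pos (- (beta * Ham h (minus1 L))).
have Z0 : 0 < Zpart h beta L.
  rewrite /Zpart /Rsum (bigD1 (minus1 L)) //=.
  have := @Rsum_ge0 _ (fun i => xpredT i && (i != minus1 L)) (fun s => exp (- (beta * Ham h s)))
    (fun i _ => Rlt_le _ _ (exp_pos _)).
  rewrite /Rsum; move: (\big[Rplus/R0]_(i | _) _) => r. simpl. lra.
have -> : Rsum (pred1 (minus1 L)) (fun s : config L => exp (- (beta * Ham h s)))
          = exp (- (beta * Ham h (minus1 L))).
  by rewrite /Rsum (big_pred1 (minus1 L)).
have -> : forall a, a / Zpart h beta L / (exp (- (beta * Ham h (minus1 L))) / Zpart h beta L)
    = a * / exp (- (beta * Ham h (minus1 L))).
  move=> a; field; split; apply: Rgt_not_eq; [exact: w0 | exact: Z0].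
rewrite /Rsum big_distrl /=; apply: eq_bigr => s _.
rewrite -exp_Ropp -exp_plus; congr exp; ring.
Qed.

Lemma rect_card L (a b : 'I_L) (w v : nat) :
  (#|[set y : site L | in_rect a b w v y]| <= w * v)%N.
Proof.
have L0 : (0 < L)%N by apply: leq_ltn_trans (ltn_ord a).
pose f := fun p : 'I_w * 'I_v =>
  (Ordinal (ltn_pmod (a + p.1) L0), Ordinal (ltn_pmod (b + p.2) L0)) : site L.
apply: (@leq_trans #|f @: [set: 'I_w * 'I_v]|); last first.
  by apply: leq_trans (leq_imset_card _ _) _; rewrite cardsT card_prod !card_ord.
apply: subset_leq_card; apply/subsetP => y; rewrite inE /in_rect => /andP [h1 h2].
apply/imsetP; exists (Ordinal h1, Ordinal h2) => //.
case: y h1 h2 => y1 y2 h1 h2; congr pair; apply: val_inj => /=.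
  have ha := ltn_ord a; rewrite modnDmr (_ : (a + (y1 + L - a) = y1 + L)%N); last by lia.
  by rewrite modnDr modn_small.
have hb := ltn_ord b; rewrite modnDmr (_ : (b + (y2 + L - b) = y2 + L)%N); last by lia.
by rewrite modnDr modn_small.
Qed.

Lemma S1c_rect L (a b : 'I_L) (w v : nat) :
  S1c [ffun x => if in_rect a b w v x then spin_0 else spin_m1] = [set y | in_rect a b w v y].
Proof. by apply/setP => y; rewrite !inE ffunE; case: (in_rect a b w v y). Qed.

Lemma valley_sub (h : R) L (s : config L) : valley h s && (s != minus1 L) ->
  (S1c s != set0) && (#|S1c s| <= n0 h * n0 h + n0 h + 1)%N.
Proof.
case/andP => vs ne; apply/andP; split.
  apply: contra ne => /eqP e; apply/eqP/ffunP => x; rewrite ffunE.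
  have : x \notin S1c s by rewrite e inE.
  by rewrite inE negbK => /eqP.
move: vs; rewrite /valley => /orP [H | /existsP [t /existsP [x /andP [Rt fl]]]].
  have -> : #|S1c s| = Nnot s by [].
  apply: leq_trans H _; lia.
have sub : S1c s \subset x |: S1c t.
  apply/subsetP => y; rewrite !inE; case: (eqVneq y x) => [->|ne'] //=.
  by move: fl => /orP [/eqP -> | /eqP ->]; rewrite ffunE (negbTE ne').
have ct : (#|S1c t| <= n0 h * (n0 h).+1)%N.
  move: Rt => /existsP [a /existsP [b /orP [/eqP -> | /eqP ->]]]; rewrite S1c_rect.
    exact: rect_card.
  rewrite mulnC; exact: rect_card.
apply: leq_trans (subset_leq_card sub) _; rewrite cardsU1.
have : ((x \notin S1c t) <= 1)%N by case: (x \notin S1c t).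
lia.
Qed.


Local Close Scope R_scope.
Local Open Scope R_scope.

Lemma Rsum_sub (I : finType) (P Q : pred I) (F : I -> R) :
  (forall i, P i -> Q i) -> (forall i, 0 <= F i) -> Rsum P F <= Rsum Q F.
Proof.
move=> PQ F0; rewrite /Rsum [X in X <= _]big_mkcond [X in _ <= X]big_mkcond.
apply: (big_ind2 (fun a b => a <= b)); first exact: Rle_refl.
  by move=> *; apply: Rplus_le_compat.
move=> i _; case Pi: (P i); first by rewrite (PQ i Pi); apply: Rle_refl.
by case: (Q i); [exact: F0 | exact: Rle_refl].
Qed.

Lemma key_bound (h beta : R) L :
  0 < h < 1 -> 0 < beta -> (n0 h * (n0 h).+1 + 2 <= L)%N ->
  let M := (n0 h * n0 h + n0 h + 1)%N in
  INR (L * L) * exp (-2 * beta) < / (4 * (INR (2 ^ M) * INR (2 ^ M))) ->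
  mu h beta (fun s : config L => valley h s && (s != minus1 L)) / mu h beta (pred1 (minus1 L))
  <= INR (2 ^ M) * (INR (2 ^ (M * M)) * (4 * (INR (2 ^ M) * INR (2 ^ M))))
     * (INR (L * L) * exp (-2 * beta)).
Proof.
move=> hh b0 HL M X.
have [m1 hm] := n0_facts hh.
have h0 : 0 < h by case: hh.
have ML : (M < L)%N by rewrite /M; lia.
set q := exp (- beta).
have q0 : 0 < q by apply: exp_pos.
have e2 : exp (-2 * beta) = q * q by rewrite /q -exp_plus; congr exp; ring.
rewrite e2 mult_INR in X *.
set P := INR (2 ^ M) in X *.
have P1 : 1 <= P.
  by rewrite /P -INR_1; apply: le_INR; apply/leP; rewrite expn_gt0.
set z := INR L * q.
have z0 : 0 <= z by apply: Rmult_le_pos; [apply: pos_INR | lra].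
have Xz : z * z < / (4 * (P * P)) by rewrite /z; move: X; apply: Rle_lt_trans; right; ring.
have cond : 2 * (INR L * (INR (2 ^ M) * exp (- beta))) <= 1.
  rewrite -/q -/P.
  have : (2 * P * z) * (2 * P * z) < 1.
    have -> : 2 * P * z * (2 * P * z) = (4 * (P * P)) * (z * z) by ring.
    have hp : 0 < 4 * (P * P) by apply: Rmult_lt_0_compat; [lra | apply: Rmult_lt_0_compat; lra].
    apply: (Rlt_le_trans _ ((4 * (P * P)) * / (4 * (P * P)))).
      by apply: Rmult_lt_compat_l.
    rewrite (Rinv_r _ (Rgt_not_eq _ _ hp)); lra.
  have : 0 <= 2 * P * z by nra.
  rewrite /z; nra.
rewrite ratio_eq.
apply: (Rle_trans _ _ _ (Rsum_sub (Q := fun s : config L => (S1c s != set0) && (#|S1c s| <= M)%N) _ _)).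
- move=> s; exact: valley_sub.
- by move=> s; apply: Rlt_le; apply: exp_pos.
- apply: (Rle_trans _ _ _ (main_bound h0 hm m1 ML b0 cond)).
  right; rewrite /P /M /q; ring.
Qed.

Theorem lemma8p2 (h : R) (L : R -> nat) :
  0 < h < 1 ->
  (forall z : Z, 2 / h <> IZR z) ->
  (forall beta : R, 0 < beta -> (n0 h * (n0 h).+1 + 2 <= L beta)%N) ->
  (forall eps : R, 0 < eps -> exists B : R, forall beta : R, B <= beta ->
       Rabs (INR (L beta * L beta)%N * exp (-2 * beta)) < eps) ->
  (exists C0 : R, forall beta : R, 0 < beta -> C0 <= beta ->
     mu h beta (fun s : config (L beta) => valley h s && (s != minus1 (L beta)))
       / mu h beta (pred1 (minus1 (L beta)))
     <= C0 * INR (L beta * L beta)%N * exp (-2 * beta))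
  /\
  (forall eps : R, 0 < eps -> exists B : R, forall beta : R, 0 < beta -> B <= beta ->
     Rabs (mu h beta (fun s : config (L beta) => valley h s && (s != minus1 (L beta)))
             / mu h beta (pred1 (minus1 (L beta)))) < eps).
Proof.
move=> hh _ HL Hlim.
set M := (n0 h * n0 h + n0 h + 1)%N.
set P := INR (2 ^ M).
set K := P * (INR (2 ^ (M * M)) * (4 * (P * P))).
have P1 : 1 <= P by rewrite /P -INR_1; apply: le_INR; apply/leP; rewrite expn_gt0.
have K0 : 0 <= K.
  rewrite /K; apply: Rmult_le_pos; first lra.
  apply: Rmult_le_pos; first exact: pos_INR.
  apply: Rmult_le_pos; first lra.
  apply: Rmult_le_pos; lra.
have e0 : 0 < / (4 * (P * P)).
  apply: Rinv_0_lt_compat; apply: Rmult_lt_0_compat; [lra | apply: Rmult_lt_0_compat; lra].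
have [B0 HB0] := Hlim _ e0.
have Xpos : forall beta, 0 <= INR (L beta * L beta) * exp (-2 * beta).
  by move=> beta; apply: Rmult_le_pos; [apply: pos_INR | apply: Rlt_le; apply: exp_pos].
have key : forall beta, 0 < beta -> B0 <= beta ->
    mu h beta (fun s : config (L beta) => valley h s && (s != minus1 (L beta)))
       / mu h beta (pred1 (minus1 (L beta))) <= K * (INR (L beta * L beta) * exp (-2 * beta)).
  move=> beta b0 hb.
  have X := HB0 beta hb; rewrite Rabs_right in X; last by apply: Rle_ge.
  exact: (key_bound hh b0 (HL beta b0) X).
have rpos : forall beta, 0 <= mu h beta (fun s : config (L beta) => valley h s && (s != minus1 (L beta)))
       / mu h beta (pred1 (minus1 (L beta))).
  move=> beta; rewrite ratio_eq; apply: Rsum_ge0 => s _; apply: Rlt_le; exact: exp_pos.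
split.
  exists (Rmax B0 K) => beta b0 hb.
  apply: (Rle_trans _ _ _ (key beta b0 (Rle_trans _ _ _ (Rmax_l _ _) hb))).
  rewrite Rmult_assoc; apply: Rmult_le_compat_r; first exact: Xpos.
  exact: Rmax_r.
move=> eps ep.
have e1 : 0 < eps / (K + 1) by apply: Rdiv_lt_0_compat; lra.
have [B1 HB1] := Hlim _ e1.
exists (Rmax B0 B1) => beta b0 hb.
rewrite Rabs_right; last by apply: Rle_ge.
have X := HB1 beta (Rle_trans _ _ _ (Rmax_r _ _) hb).
rewrite Rabs_right in X; last by apply: Rle_ge.
apply: (Rle_lt_trans _ _ _ (key beta b0 (Rle_trans _ _ _ (Rmax_l _ _) hb))).
have Xp := Xpos beta.
move: (INR _ * _) X Xp => x X Xp.
apply: (Rle_lt_trans _ ((K + 1) * x)); first nra.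
have -> : eps = (K + 1) * (eps / (K + 1)) by field; lra.
apply: Rmult_lt_compat_l => //; lra.
Qed.
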